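(* Let $0.5208<\sigma_0<0.9723$, $10^3\le H<H_0$ with $H_0=3.061\cdot10^{10}$, and $T\ge H_0$. Then \[ \frac{2}{T-H}\int_H^T\sum_{1\le n<m<t}\frac{\cos(t\log(m/n))}{(nm)^{\sigma_0}}\,dt\le \epsilon_1(\sigma_0,H). \]
   Context: Here $H_0=3.061\cdot10^{10}$, $\zeta$ is the Riemann zeta function, and \[ \epsilon_1(\sigma_0,H)=\frac{4H_0}{H_0-H}\Big(\frac{(\log H_0)H_0^{1-2\sigma_0}}{2(1-\sigma_0)}-\frac{(2\sigma_0-1)\log H_0}{2(1-\sigma_0)H_0}+\frac{\max\big(0,\frac{1-3\sigma_0+3\sigma_0^2}{2(1-\sigma_0)^2}-\frac{\zeta(2\sigma_0)}{2}\big)}{H_0}+\frac{(2-\sigma_0)H_0^{1-2\sigma_0}}{2(1-\sigma_0)^2}-\frac{\sigma_0H_0^{-\sigma_0}}{(1-\sigma_0)^2}+\frac{H_0^{-2\sigma_0}}{2(2\sigma_0-1)}+\frac{H_0^{-2\sigma_0-1}}{2}\Big). \] The inner sum is over pairs of integers $(n,m)$ with $1\le n<m<t$. *)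

(* Defs.v *)
From Stdlib Require Import Reals Lra Lia ZArith ClassicalEpsilon.
Open Scope R_scope.

Definition H0 : R := IZR 30610000000.

(* Riemann zeta for real s > 1 (the only case used: s = 2 sigma_0 > 1),
   defined as the limit of the partial sums  sum_{k=1}^{N+1} k^{-s}. *)
Definition zeta_partial (s : R) (N : nat) : R :=
  sum_f_R0 (fun k => / Rpower (INR (k + 1)) s) N.

Definition riemann_zeta (s : R) : R :=
  epsilon (inhabits 0) (fun z => Un_cv (zeta_partial s) z).

Definition eps1 (s H : R) : R :=
  4 * H0 / (H0 - H) *
  ( ln H0 * Rpower H0 (1 - 2 * s) / (2 * (1 - s))
    - (2 * s - 1) * ln H0 / (2 * (1 - s) * H0)
    + Rmax 0 ((1 - 3 * s + 3 * s ^ 2) / (2 * (1 - s) ^ 2)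
              - riemann_zeta (2 * s) / 2) / H0
    + (2 - s) * Rpower H0 (1 - 2 * s) / (2 * (1 - s) ^ 2)
    - s * Rpower H0 (- s) / (1 - s) ^ 2
    + Rpower H0 (- 2 * s) / (2 * (2 * s - 1))
    + Rpower H0 (- 2 * s - 1) / 2 ).

(* All integers m < t satisfy m <= Z.to_nat (up t), so the finite range
   0..Z.to_nat (up t) for m (and 0..m for n) covers all pairs; pairs
   violating 1 <= n < m < t contribute 0. *)
Definition pair_term (s t : R) (m n : nat) : R :=
  if Rlt_dec (INR m) t then
    if andb (Nat.ltb 0 n) (Nat.ltb n m) then
      cos (t * ln (INR m / INR n)) / Rpower (INR n * INR m) s
    else 0
  else 0.

Definition inner_sum (s t : R) : R :=
  sum_f_R0 (fun m => sum_f_R0 (fun n => pair_term s t m n) m) (Z.to_nat (up t)).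

(* Main.v *)
Require Import Defs.
From Coquelicot Require Import Coquelicot.
From Stdlib Require Import Reals Lra Lia ZArith ClassicalEpsilon Arith.
Open Scope R_scope.

Lemma ln_div x y : 0 < x -> 0 < y -> ln (x / y) = ln x - ln y.
Proof. intros. unfold Rdiv. rewrite ln_mult, ln_Rinv; try ring; auto. apply Rinv_0_lt_compat; auto. Qed.

Lemma ln_le' x y : 0 < x -> x <= y -> ln x <= ln y.
Proof. intros Hx [H|H]. left; apply ln_increasing; auto. subst; lra. Qed.

Lemma ln_le_sub1 x : 0 < x -> ln x <= x - 1.
Proof. intros Hx. pose proof (exp_ineq1_le (ln x)). rewrite exp_ln in H; lra. Qed.

Lemma exp_tangent a c : exp c * (1 + a - c) <= exp a.
Proof.
  replace a with (c + (a - c)) at 2 by ring. rewrite exp_plus.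
  pose proof (exp_ineq1_le (a - c)). pose proof (exp_pos c).
  apply Rmult_le_compat_l; lra.
Qed.

Lemma rpow_concave y e : 0 < y -> 0 <= e <= 1 -> Rpower y e <= 1 + e * (y - 1).
Proof.
  intros Hy He. unfold Rpower.
  pose proof (exp_tangent (ln y) (e * ln y)). pose proof (exp_tangent 0 (e * ln y)).
  rewrite exp_ln in H by lra. rewrite exp_0 in H0.
  assert (e * (exp (e * ln y) * (1 + ln y - e * ln y)) + (1 - e) * (exp (e * ln y) * (1 + 0 - e * ln y))
          <= e * y + (1 - e) * 1).
  { apply Rplus_le_compat; apply Rmult_le_compat_l; lra. }
  replace (e * (exp (e * ln y) * (1 + ln y - e * ln y)) + (1 - e) * (exp (e * ln y) * (1 + 0 - e * ln y)))
    with (exp (e * ln y)) in H1 by ring. lra.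
Qed.

Lemma Rpower_pos x y : 0 < Rpower x y.
Proof. unfold Rpower; apply exp_pos. Qed.

Lemma Rpower_minus1 p e : 0 < p -> Rpower p (e - 1) = Rpower p e / p.
Proof.
  intros Hp. unfold Rminus. rewrite Rpower_plus, Rpower_Ropp, Rpower_1 by lra. reflexivity.
Qed.

Lemma rpow_step p e : 1 < p -> 0 < e < 1 ->
  e * Rpower p (e - 1) <= Rpower p e - Rpower (p - 1) e.
Proof.
  intros Hp He.
  assert (Hy : 0 < (p - 1) / p) by (apply Rdiv_lt_0_compat; lra).
  pose proof (rpow_concave ((p-1)/p) e Hy ltac:(lra)).
  assert (E : Rpower (p-1) e = Rpower p e * Rpower ((p-1)/p) e).
  { rewrite Rpower_mult_distr by lra. f_equal. field. lra. }
  rewrite E, Rpower_minus1 by lra.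
  pose proof (Rpower_pos p e).
  assert (Rpower p e * Rpower ((p - 1) / p) e <= Rpower p e * (1 + e * ((p - 1) / p - 1))).
  { apply Rmult_le_compat_l; lra. }
  replace (Rpower p e * (1 + e * ((p - 1) / p - 1))) with (Rpower p e - e * (Rpower p e / p)) in H1
    by (field; lra). lra.
Qed.

Lemma rpow_tail_step m q : 1 < m -> 1 < q ->
  (q - 1) * Rpower m (- q) <= Rpower (m - 1) (1 - q) - Rpower m (1 - q).
Proof.
  intros Hm Hq.
  assert (Hy : 0 < (m - 1) / m) by (apply Rdiv_lt_0_compat; lra).
  assert (E : Rpower (m-1) (1-q) = Rpower m (1-q) * Rpower ((m-1)/m) (1-q)).
  { rewrite Rpower_mult_distr by lra. f_equal. field. lra. }
  assert (E2 : Rpower m (- q) = Rpower m (1 - q) / m).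
  { replace (-q) with ((1 - q) - 1) by ring. apply Rpower_minus1; lra. }
  rewrite E, E2.
  assert (Hb : 1 + (q - 1) / m <= Rpower ((m-1)/m) (1-q)).
  { unfold Rpower. pose proof (exp_ineq1_le ((1 - q) * ln ((m - 1) / m))).
    pose proof (ln_le_sub1 _ Hy).
    assert ((q - 1) / m <= (1 - q) * ln ((m - 1) / m)).
    { replace ((1 - q) * ln ((m - 1) / m)) with ((q - 1) * (- ln ((m - 1) / m))) by ring.
      replace ((q-1)/m) with ((q-1) * (1 - (m-1)/m)) by (field; lra).
      apply Rmult_le_compat_l; lra. }
    lra. }
  pose proof (Rpower_pos m (1 - q)).
  assert (Rpower m (1 - q) * (1 + (q - 1) / m) <= Rpower m (1 - q) * Rpower ((m - 1) / m) (1 - q)).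
  { apply Rmult_le_compat_l; lra. }
  replace (Rpower m (1 - q) * (1 + (q - 1) / m)) with (Rpower m (1 - q) + (q - 1) * (Rpower m (1 - q) / m)) in H0
    by (field; lra). lra.
Qed.

Lemma harm_step k : 1 < k -> / k <= ln k - ln (k - 1).
Proof.
  intros Hk. assert (0 < (k-1)/k) by (apply Rdiv_lt_0_compat; lra).
  pose proof (ln_le_sub1 _ H). rewrite ln_div in H0 by lra.
  replace ((k-1)/k - 1) with (- / k) in H0 by (field; lra). lra.
Qed.

Lemma inv_ln_ratio n m : 0 < n -> n < m -> / ln (m / n) <= m / (m - n).
Proof.
  intros Hn Hnm.
  assert (0 < n / m) by (apply Rdiv_lt_0_compat; lra).
  pose proof (ln_le_sub1 _ H).
  assert (ln (m / n) = - ln (n / m)).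
  { rewrite !ln_div by lra. ring. }
  assert ((m - n) / m <= ln (m / n)).
  { rewrite H1. replace ((m-n)/m) with (- (n/m - 1)) by (field; lra). lra. }
  assert (0 < (m - n) / m) by (apply Rdiv_lt_0_compat; lra).
  replace (m / (m - n)) with (/ ((m - n) / m)) by (field; lra).
  apply Rinv_le_contravar; lra.
Qed.

Lemma ln_H0_ge : 23 <= ln (IZR 30610000000).
Proof.
  assert (E : exp (1/16) <= 16/15).
  { pose proof (exp_ineq1_le (-(1/16))). rewrite exp_Ropp in H.
    pose proof (exp_pos (1/16)).
    assert (15/16 * exp (1/16) <= 1).
    { apply (Rmult_le_reg_r (/ exp (1/16))). apply Rinv_0_lt_compat; lra.
      rewrite Rmult_assoc, Rinv_r by lra. lra. }
    lra. }
  assert (E2 : exp 23 = exp (1/16) ^ 368).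
  { rewrite <- Rpower_pow by apply exp_pos. unfold Rpower. rewrite ln_exp. f_equal.
    replace (INR 368) with 368 by (simpl; ring). field. }
  assert (exp (1/16) ^ 368 <= (16/15)^368).
  { apply pow_incr. split; [left; apply exp_pos | exact E]. }
  assert ((16/15)^368 <= 30610000000) by lra.
  rewrite <- (ln_exp 23). apply ln_le'; [apply exp_pos | lra].
Qed.

Definition selT (T : R) (p : nat) (x : R) : R :=
  if Nat.ltb 0 p then (if Rlt_dec (INR p) T then x else 0) else 0.

Lemma sum_bound (T : R) (g F : R -> R) : 1 < T -> g 1 <= F 1 ->
  (forall x, 1 <= x -> g (x+1) <= F (x+1) - F x) ->
  (forall x y, 1 <= x -> x <= y -> F x <= F y) ->
  forall K, (1 <= K)%nat -> sum_f_R0 (fun p => selT T p (g (INR p))) K <= F T.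
Proof.
  intros HT Hb Hs Hm K HK.
  assert (Inv : forall K, (1 <= K)%nat ->
     sum_f_R0 (fun p => selT T p (g (INR p))) K <= F (Rmin (INR K) T)).
  { clear K HK. induction K as [|K IH]; intros HK; [lia|].
    destruct (Nat.eq_dec K 0) as [->|HK0].
    - simpl. unfold selT. simpl. destruct (Rlt_dec 1 T); [|lra].
      rewrite Rmin_left by lra. lra.
    - specialize (IH ltac:(lia)). rewrite tech5.
      assert (HK1 : 1 <= INR K) by (apply (le_INR 1); lia).
      unfold selT at 2. replace (Nat.ltb 0 (S K)) with true by reflexivity.
      destruct (Rlt_dec (INR (S K)) T) as [Hlt|Hge]; rewrite S_INR in *.
      + rewrite Rmin_left in IH by lra. rewrite Rmin_left by lra.
        specialize (Hs _ HK1). lra.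
      + assert (F (Rmin (INR K) T) <= F (Rmin (INR K + 1) T)).
        { apply Hm. apply Rmin_glb; lra. 
          unfold Rmin. destruct (Rle_dec (INR K) T), (Rle_dec (INR K + 1) T); lra. }
        lra. }
  specialize (Inv K HK). assert (F (Rmin (INR K) T) <= F T).
  { apply Hm. assert (1 <= INR K) by (apply (le_INR 1); lia). apply Rmin_glb; lra. apply Rmin_r. }
  lra.
Qed.

Lemma sum_nonneg_f (f : nat -> R) K : (forall p, 0 <= f p) -> 0 <= sum_f_R0 f K.
Proof. intros H. induction K; simpl; [apply H|]. pose proof (H (S K)); lra. Qed.

Lemma sum_mono_idx (f : nat -> R) a d : (forall p, 0 <= f p) ->
  sum_f_R0 f a <= sum_f_R0 f (a + d).
Proof.
  intros H. induction d. rewrite Nat.add_0_r; lra.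
  rewrite Nat.add_succ_r. simpl. pose proof (H (S (a + d))). lra.
Qed.

Lemma sum_cut (f : nat -> R) M K : (forall p, 0 <= f p) -> (forall p, (M < p)%nat -> f p = 0) ->
  sum_f_R0 f K <= sum_f_R0 f M.
Proof.
  intros H0 HM. induction K.
  - replace M with (0 + M)%nat by lia. apply sum_mono_idx; auto.
  - destruct (le_lt_dec (S K) M).
    + pose proof (sum_mono_idx f (S K) (M - S K) H0) as H.
      replace (S K + (M - S K))%nat with M in H by lia. exact H.
    + rewrite tech5, (HM (S K)) by lia. lra.
Qed.

Lemma Rpower_neg_anti a b q : 0 < a -> a <= b -> 0 <= q -> Rpower b (- q) <= Rpower a (- q).
Proof.
  intros Ha Hab Hq. rewrite !Rpower_Ropp. apply Rinv_le_contravar. apply Rpower_pos.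
  apply Rle_Rpower_l; lra.
Qed.

Lemma INR_pos_lt p : (0 < p)%nat -> 0 < INR p.
Proof. intros; apply lt_0_INR; auto. Qed.

Lemma boundA T e K : 1 < T -> 0 < e < 1 -> (1 <= K)%nat ->
  sum_f_R0 (fun p => selT T p (Rpower (INR p) (e - 1))) K <= 1 + (Rpower T e - 1) / e.
Proof.
  intros HT He HK.
  apply (sum_bound T (fun x => Rpower x (e - 1)) (fun x => 1 + (Rpower x e - 1) / e)); auto.
  - unfold Rpower. rewrite ln_1, !Rmult_0_r, exp_0.
    replace ((1 - 1) / e) with 0 by (field; lra). lra.
  - intros x Hx. pose proof (rpow_step (x + 1) e ltac:(lra) He).
    replace (x + 1 - 1) with x in H by ring.
    apply (Rmult_le_reg_l e); [lra|]. replace (e * (1 + (Rpower (x + 1) e - 1) / e - (1 + (Rpower x e - 1) / e)))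
      with (Rpower (x + 1) e - Rpower x e) by (field; lra). lra.
  - intros x y Hx Hxy. assert (Rpower x e <= Rpower y e) by (apply Rle_Rpower_l; lra).
    apply Rplus_le_compat_l. unfold Rdiv. apply Rmult_le_compat_r. left; apply Rinv_0_lt_compat; lra. lra.
Qed.

Lemma boundB T K : 1 < T -> (1 <= K)%nat ->
  sum_f_R0 (fun p => selT T p (/ INR p)) K <= 1 + ln T.
Proof.
  intros HT HK.
  apply (sum_bound T (fun x => / x) (fun x => 1 + ln x)); auto.
  - rewrite ln_1, Rinv_1. lra.
  - intros x Hx. pose proof (harm_step (x + 1) ltac:(lra)).
    replace (x + 1 - 1) with x in H by ring. lra.
  - intros x y Hx Hxy. pose proof (ln_le' x y ltac:(lra) Hxy). lra.
Qed.

Lemma tail_bound q Y K : 1 < q -> 1 <= Y ->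
  sum_f_R0 (fun p => if Nat.ltb 0 p then (if Rlt_dec (INR p) Y then 0 else Rpower (INR p) (- q)) else 0) K
   <= Rpower Y (- q) + Rpower Y (1 - q) / (q - 1).
Proof.
  intros Hq HY.
  set (f := fun p => if Nat.ltb 0 p then (if Rlt_dec (INR p) Y then 0 else Rpower (INR p) (- q)) else 0).
  assert (Inv : forall K : nat, (INR K < Y -> sum_f_R0 f K = 0) /\
     (Y <= INR K -> sum_f_R0 f K <= Rpower Y (- q) + (Rpower Y (1 - q) - Rpower (INR K) (1 - q)) / (q - 1))).
  { clear K. intros K. induction K as [|K IH].
    - split; intros H. simpl. unfold f. reflexivity. simpl in H. lra.
    - destruct IH as [IH1 IH2]. rewrite tech5. rewrite S_INR.
      assert (Hf : f (S K) = if Rlt_dec (INR K + 1) Y then 0 else Rpower (INR K + 1) (- q))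
        by (unfold f; rewrite S_INR; reflexivity). rewrite Hf.
      assert (0 <= INR K) by apply pos_INR.
      destruct (Rlt_dec (INR K + 1) Y) as [Hlt|Hge].
      + split; intros H'. rewrite IH1 by lra. ring. lra.
      + split; intros H'; [lra|].
        destruct (Rlt_dec (INR K) Y) as [Hlt2|Hge2].
        * rewrite IH1 by lra. 
          assert (Rpower (INR K + 1) (- q) <= Rpower Y (- q)) by (apply Rpower_neg_anti; lra).
          assert (Rpower (INR K + 1) (1 - q) <= Rpower Y (1 - q)).
          { replace (1 - q) with (- (q - 1)) by ring. apply Rpower_neg_anti; lra. }
          assert (0 <= (Rpower Y (1 - q) - Rpower (INR K + 1) (1 - q)) / (q - 1)).
          { unfold Rdiv. apply Rmult_le_pos. lra. left; apply Rinv_0_lt_compat; lra. }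
          lra.
        * specialize (IH2 ltac:(lra)).
          pose proof (rpow_tail_step (INR K + 1) q ltac:(lra) Hq).
          replace (INR K + 1 - 1) with (INR K) in H0 by ring.
          assert (Rpower (INR K + 1) (- q) <= (Rpower (INR K) (1 - q) - Rpower (INR K + 1) (1 - q)) / (q - 1)).
          { apply (Rmult_le_reg_l (q - 1)); [lra|].
            replace ((q - 1) * ((Rpower (INR K) (1 - q) - Rpower (INR K + 1) (1 - q)) / (q - 1)))
              with (Rpower (INR K) (1 - q) - Rpower (INR K + 1) (1 - q)) by (field; lra). lra. }
          assert (Rpower Y (- q) + (Rpower Y (1 - q) - Rpower (INR K) (1 - q)) / (q - 1) +
             (Rpower (INR K) (1 - q) - Rpower (INR K + 1) (1 - q)) / (q - 1) =
             Rpower Y (- q) + (Rpower Y (1 - q) - Rpower (INR K + 1) (1 - q)) / (q - 1)) by (field; lra).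
          lra. }
  destruct (Inv K) as [I1 I2].
  assert (0 <= Rpower Y (- q)) by (left; apply Rpower_pos).
  assert (0 <= Rpower Y (1 - q) / (q - 1)).
  { unfold Rdiv. apply Rmult_le_pos. left; apply Rpower_pos. left; apply Rinv_0_lt_compat; lra. }
  destruct (Rlt_dec (INR K) Y).
  - rewrite I1 by auto. lra.
  - specialize (I2 ltac:(lra)).
    assert (0 <= Rpower (INR K) (1 - q) / (q - 1)).
    { unfold Rdiv. apply Rmult_le_pos. left; apply Rpower_pos. left; apply Rinv_0_lt_compat; lra. }
    assert ((Rpower Y (1 - q) - Rpower (INR K) (1 - q)) / (q - 1) = Rpower Y (1 - q) / (q - 1) - Rpower (INR K) (1 - q) / (q - 1)) by (field; lra).
    lra.
Qed.

Lemma zeta_partial_bound q Y M K : 1 < q -> 1 <= Y -> Y <= INR M ->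
  zeta_partial q K <= sum_f_R0 (fun p => selT Y p (Rpower (INR p) (- q))) M
     + (Rpower Y (- q) + Rpower Y (1 - q) / (q - 1)).
Proof.
  intros Hq HY HM.
  set (h := fun p => if Nat.ltb 0 p then Rpower (INR p) (- q) else 0).
  set (t := fun p => if Nat.ltb 0 p then (if Rlt_dec (INR p) Y then 0 else Rpower (INR p) (- q)) else 0).
  assert (E1 : zeta_partial q K = sum_f_R0 h (S K)).
  { rewrite (decomp_sum h (S K)) by lia. simpl pred. unfold zeta_partial.
    replace (h 0%nat) with 0 by reflexivity. rewrite Rplus_0_l.
    apply sum_eq. intros i _. unfold h. simpl Nat.ltb. cbv iota.
    rewrite Rpower_Ropp, Nat.add_1_r. reflexivity. }
  assert (E2 : sum_f_R0 h (S K) = sum_f_R0 (fun p => selT Y p (Rpower (INR p) (- q))) (S K) + sum_f_R0 t (S K)).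
  { rewrite <- sum_plus. apply sum_eq. intros i _. unfold h, t, selT.
    destruct (Nat.ltb 0 i); [|ring]. destruct (Rlt_dec (INR i) Y); ring. }
  rewrite E1, E2.
  assert (sum_f_R0 (fun p => selT Y p (Rpower (INR p) (- q))) (S K) <= sum_f_R0 (fun p => selT Y p (Rpower (INR p) (- q))) M).
  { apply sum_cut.
    - intros p. unfold selT. destruct (Nat.ltb 0 p); [|lra]. destruct (Rlt_dec (INR p) Y); [|lra].
      left; apply Rpower_pos.
    - intros p Hp. unfold selT. destruct (Nat.ltb 0 p); [|reflexivity].
      destruct (Rlt_dec (INR p) Y); [|reflexivity]. apply lt_INR in Hp. lra. }
  pose proof (tail_bound q Y (S K) Hq HY). fold t in H0. lra.
Qed.

Lemma zeta_cv q : 1 < q -> Un_cv (zeta_partial q) (riemann_zeta q).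
Proof.
  intros Hq. unfold riemann_zeta. apply epsilon_spec.
  assert (Hg : Un_growing (zeta_partial q)).
  { intros n. unfold zeta_partial. rewrite tech5. pose proof (Rpower_pos (INR (S n + 1)) q).
    pose proof (Rinv_0_lt_compat _ H). lra. }
  assert (Hb : has_ub (zeta_partial q)).
  { exists (sum_f_R0 (fun p => selT 1 p (Rpower (INR p) (- q))) 1 + (Rpower 1 (- q) + Rpower 1 (1 - q) / (q - 1))).
    intros x [n ->]. apply zeta_partial_bound; simpl; lra. }
  destruct (growing_cv _ Hg Hb) as [l Hl]. exists l; exact Hl.
Qed.

Lemma lim_le (u : nat -> R) l B : Un_cv u l -> (forall n, u n <= B) -> l <= B.
Proof.
  intros Hu Hb. destruct (Rle_dec l B) as [|Hn]; auto. exfalso.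
  destruct (Hu (l - B) ltac:(lra)) as [N HN]. specialize (HN N (Nat.le_refl N)).
  unfold Rdist in HN. specialize (Hb N). apply Rabs_def2 in HN. lra.
Qed.

Lemma zeta_le q Y M : 1 < q -> 1 <= Y -> Y <= INR M ->
  riemann_zeta q <= sum_f_R0 (fun p => selT Y p (Rpower (INR p) (- q))) M
     + (Rpower Y (- q) + Rpower Y (1 - q) / (q - 1)).
Proof.
  intros. apply (lim_le (zeta_partial q)). apply zeta_cv; auto.
  intros n. apply zeta_partial_bound; auto.
Qed.

Lemma cauchy_le (a b : nat -> R) N : (forall p, 0 <= a p) -> (forall p, 0 <= b p) ->
  sum_f_R0 (fun m => sum_f_R0 (fun n => a n * b (m - n)%nat) m) N <= sum_f_R0 a N * sum_f_R0 b N.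
Proof.
  intros Ha Hb. destruct N as [|N].
  - simpl. lra.
  - rewrite (cauchy_finite a b (S N)) by lia.
    assert (0 <= sum_f_R0 (fun k => sum_f_R0 (fun l => a (S (l + k)) * b (S N - l)%nat) (pred (S N - k))) (pred (S N))).
    { apply sum_nonneg_f. intros k. apply sum_nonneg_f. intros l. apply Rmult_le_pos; auto. }
    lra.
Qed.

Lemma pair_sum_id (c : nat -> R) N :
  sum_f_R0 (fun m => sum_f_R0 (fun n => if Nat.ltb n m then c n * c m else 0) m) N =
  (sum_f_R0 c N * sum_f_R0 c N - sum_f_R0 (fun n => c n * c n) N) / 2.
Proof.
  induction N.
  - simpl. field.
  - rewrite !tech5, IHN.
    assert (sum_f_R0 (fun n => if Nat.ltb n (S N) then c n * c (S N) else 0) N = sum_f_R0 c N * c (S N)).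
    { rewrite Rmult_comm, scal_sum. apply sum_eq. intros i Hi.
      replace (Nat.ltb i (S N)) with true by (symmetry; apply Nat.ltb_lt; lia). reflexivity. }
    rewrite H. replace (Nat.ltb (S N) (S N)) with false by (symmetry; apply Nat.ltb_irrefl). field.
Qed.

Definition wt (s T : R) (m n : nat) : R :=
  if andb (Nat.ltb 0 n) (Nat.ltb n m) then
    (if Rlt_dec (INR m) T then / (Rpower (INR n * INR m) s * ln (INR m / INR n)) else 0)
  else 0.

Lemma selT_nonneg T p x : 0 <= x -> 0 <= selT T p x.
Proof. intros. unfold selT. destruct (Nat.ltb 0 p); [destruct (Rlt_dec (INR p) T)|]; lra. Qed.

Lemma inv_INR_nonneg p : 0 <= / INR p.
Proof. destruct p. simpl. rewrite Rinv_0. lra. left. apply Rinv_0_lt_compat, lt_0_INR. lia. Qed.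

Lemma wt_bound s T m n : 0 < s -> (n <= m)%nat ->
  wt s T m n <= selT T n (Rpower (INR n) ((2 - 2 * s) - 1)) * selT T (m - n) (/ INR (m - n))
     + (if Nat.ltb n m then selT T n (Rpower (INR n) (- s)) * selT T m (Rpower (INR m) (- s)) else 0).
Proof.
  intros Hs Hnm.
  assert (R0 : 0 <= selT T n (Rpower (INR n) ((2 - 2 * s) - 1)) * selT T (m - n) (/ INR (m - n))).
  { apply Rmult_le_pos; apply selT_nonneg. left; apply Rpower_pos. apply inv_INR_nonneg. }
  assert (R1 : 0 <= (if Nat.ltb n m then selT T n (Rpower (INR n) (- s)) * selT T m (Rpower (INR m) (- s)) else 0)).
  { destruct (Nat.ltb n m); [|lra]. apply Rmult_le_pos; apply selT_nonneg; left; apply Rpower_pos. }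
  unfold wt. destruct (Nat.ltb 0 n) eqn:E0; simpl andb; [|lra].
  destruct (Nat.ltb n m) eqn:E1; [|lra].
  destruct (Rlt_dec (INR m) T) as [HmT|]; [|lra].
  apply Nat.ltb_lt in E0. apply Nat.ltb_lt in E1.
  assert (Hn : 0 < INR n) by (apply lt_0_INR; lia).
  assert (Hnm' : INR n < INR m) by (apply lt_INR; lia).
  assert (Hmn : INR (m - n) = INR m - INR n) by (apply minus_INR; lia).
  unfold selT. 
  replace (Nat.ltb 0 n) with true by (symmetry; apply Nat.ltb_lt; lia).
  replace (Nat.ltb 0 (m - n)) with true by (symmetry; apply Nat.ltb_lt; lia).
  replace (Nat.ltb 0 m) with true by (symmetry; apply Nat.ltb_lt; lia).
  destruct (Rlt_dec (INR n) T); [|lra].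
  destruct (Rlt_dec (INR (m - n)) T); [|rewrite Hmn in *; lra].
  destruct (Rlt_dec (INR m) T); [|lra].
  rewrite Hmn.
  set (Pn := Rpower (INR n) s). set (Pm := Rpower (INR m) s).
  assert (HPn : 0 < Pn) by apply Rpower_pos. assert (HPm : 0 < Pm) by apply Rpower_pos.
  assert (HPnm : Pn <= Pm) by (apply Rle_Rpower_l; lra).
  assert (Ea : Rpower (INR n) ((2 - 2 * s) - 1) = INR n / (Pn * Pn)).
  { replace ((2 - 2 * s) - 1) with (1 + (- s + - s)) by ring.
    rewrite !Rpower_plus, !Rpower_Ropp, Rpower_1 by lra. fold Pn. field. lra. }
  rewrite Ea, !Rpower_Ropp. fold Pn Pm.
  rewrite <- Rpower_mult_distr by lra. fold Pn Pm.
  pose proof (inv_ln_ratio (INR n) (INR m) Hn Hnm').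
  assert (0 < ln (INR m / INR n)).
  { rewrite ln_div by lra. pose proof (ln_increasing _ _ Hn Hnm'). lra. }
  rewrite Rinv_mult.
  apply Rle_trans with (/ (Pn * Pm) * (INR m / (INR m - INR n))).
  { apply Rmult_le_compat_l; auto. left; apply Rinv_0_lt_compat; nra. }
  replace (/ (Pn * Pm) * (INR m / (INR m - INR n))) with (INR n / (Pn * Pm * (INR m - INR n)) + / Pn * / Pm)
    by (field; lra).
  apply Rplus_le_compat_r.
  replace (INR n / (Pn * Pn) * / (INR m - INR n)) with (INR n / (Pn * Pn * (INR m - INR n))) by (field; lra).
  unfold Rdiv. apply Rmult_le_compat_l; [lra|]. apply Rinv_le_contravar. 
  apply Rmult_lt_0_compat; nra. apply Rmult_le_compat_r; [lra|]. apply Rmult_le_compat_l; lra.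
Qed.

Lemma double_bound s T M : 0 < s ->
  sum_f_R0 (fun m => sum_f_R0 (fun n => wt s T m n) m) M <=
  sum_f_R0 (fun p => selT T p (Rpower (INR p) ((2 - 2 * s) - 1))) M * sum_f_R0 (fun p => selT T p (/ INR p)) M
  + (sum_f_R0 (fun p => selT T p (Rpower (INR p) (- s))) M * sum_f_R0 (fun p => selT T p (Rpower (INR p) (- s))) M
     - sum_f_R0 (fun p => selT T p (Rpower (INR p) (- s)) * selT T p (Rpower (INR p) (- s))) M) / 2.
Proof.
  intros Hs.
  rewrite <- pair_sum_id.
  eapply Rle_trans; [|apply Rplus_le_compat_r; apply cauchy_le].
  2: { intros; apply selT_nonneg; left; apply Rpower_pos. }
  2: { intros; apply selT_nonneg; apply inv_INR_nonneg. }
  rewrite <- sum_plus. apply sum_Rle. intros m _. rewrite <- sum_plus. apply sum_Rle. intros n Hn.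
  apply wt_bound; auto.
Qed.

Lemma is_RInt_sum (f : nat -> R -> R) (B : nat -> R) a b N :
  (forall i, (i <= N)%nat -> exists v, is_RInt (f i) a b v /\ v <= B i) ->
  exists v, is_RInt (fun t => sum_f_R0 (fun i => f i t) N) a b v /\ v <= sum_f_R0 B N.
Proof.
  induction N; intros H.
  - destruct (H 0%nat (Nat.le_refl 0)) as [v [Hv Hb]]. exists v. split; [|simpl; auto].
    eapply is_RInt_ext; [|exact Hv]. intros; reflexivity.
  - destruct IHN as [v1 [H1 B1]]. { intros i Hi. apply H. lia. }
    destruct (H (S N) (Nat.le_refl _)) as [v2 [H2 B2]].
    exists (v1 + v2). split.
    + pose proof (is_RInt_plus _ _ _ _ _ _ H1 H2). eapply is_RInt_ext; [|exact H0]. intros; reflexivity.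
    + rewrite tech5. lra.
Qed.

Lemma is_RInt_zero (f : R -> R) a b : a <= b -> (forall t, a < t < b -> f t = 0) -> is_RInt f a b 0.
Proof.
  intros Hab Hf. pose proof (is_RInt_const a b (0:R)) as H.
  assert (E : scal (b - a) (0:R) = 0) by (unfold scal; simpl; unfold mult; simpl; ring).
  pose proof (eq_ind _ (fun v => is_RInt (fun _ : R => 0:R) a b v) H _ E) as H'. clear H. rename H' into H.
  eapply is_RInt_ext; [|exact H]. intros x Hx. rewrite Rmin_left, Rmax_right in Hx by lra.
  symmetry; apply Hf; lra.
Qed.

Lemma is_RInt_cos (l P a b : R) : 0 < l -> 0 < P ->
  is_RInt (fun t => cos (t * l) / P) a b ((sin (b * l) - sin (a * l)) / (l * P)).
Proof.
  intros Hl HP.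
  replace ((sin (b * l) - sin (a * l)) / (l * P)) with
     (minus ((fun t => sin (t * l) / (l * P)) b) ((fun t => sin (t * l) / (l * P)) a))
    by (unfold minus, plus, opp; simpl; field; lra).
  apply (is_RInt_derive (fun t => sin (t * l) / (l * P)) (fun t => cos (t * l) / P)).
  - intros x _. auto_derive; auto. field; lra.
  - intros x _. apply (@ex_derive_continuous R_AbsRing R_NormedModule). auto_derive. auto.
Qed.

Lemma pair_int s T H m n : 0 < H -> H <= T ->
  exists v, is_RInt (fun t => pair_term s t m n) H T v /\ v <= 2 * wt s T m n.
Proof.
  intros HH HT. unfold wt.
  destruct (andb (Nat.ltb 0 n) (Nat.ltb n m)) eqn:E.
  2: { exists 0. split; [|lra]. apply is_RInt_zero; auto. intros t _. unfold pair_term.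
       rewrite E. destruct (Rlt_dec (INR m) t); reflexivity. }
  apply Bool.andb_true_iff in E. destruct E as [E0 E1]. apply Nat.ltb_lt in E0, E1.
  assert (Hn : 0 < INR n) by (apply lt_0_INR; lia).
  assert (Hnm' : INR n < INR m) by (apply lt_INR; lia).
  set (P := Rpower (INR n * INR m) s). set (l := ln (INR m / INR n)).
  assert (HP : 0 < P) by apply Rpower_pos.
  assert (Hl : 0 < l).
  { unfold l. rewrite ln_div by lra. pose proof (ln_increasing _ _ Hn Hnm'). lra. }
  assert (Hpt : forall t, INR m < t -> pair_term s t m n = cos (t * l) / P).
  { intros t Ht. unfold pair_term. destruct (Rlt_dec (INR m) t); [|lra].
    replace (andb (Nat.ltb 0 n) (Nat.ltb n m)) with true. reflexivity.
    symmetry. apply Bool.andb_true_iff; split; apply Nat.ltb_lt; lia. }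
  assert (Hz : forall t, t <= INR m -> pair_term s t m n = 0).
  { intros t Ht. unfold pair_term. destruct (Rlt_dec (INR m) t); [lra|reflexivity]. }
  destruct (Rlt_dec (INR m) T) as [HmT|HmT].
  2: { exists 0. split; [|lra]. apply is_RInt_zero; auto. intros t Ht. apply Hz. lra. }
  assert (Hv : forall a, a <= T -> INR m <= a -> exists v, is_RInt (fun t => pair_term s t m n) a T v /\ v <= 2 * / (P * l)).
  { intros a Ha Hma. exists ((sin (T * l) - sin (a * l)) / (l * P)). split.
    - eapply is_RInt_ext; [|apply is_RInt_cos; auto]. intros x Hx.
      rewrite Rmin_left, Rmax_right in Hx by lra. symmetry; apply Hpt; lra.
    - pose proof (SIN_bound (T * l)). pose proof (SIN_bound (a * l)).
      replace (2 * / (P * l)) with (2 / (l * P)) by (field; lra).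
      unfold Rdiv. apply Rmult_le_compat_r. left; apply Rinv_0_lt_compat; nra. lra. }
  destruct (Rle_dec (INR m) H) as [HmH|HmH].
  - apply Hv; lra.
  - destruct (Hv (INR m) ltac:(lra) ltac:(lra)) as [v [Hv1 Hv2]].
    exists (0 + v). split; [|lra].
    apply (is_RInt_Chasles _ H (INR m) T 0 v); auto.
    apply is_RInt_zero; [lra|]. intros t Ht. apply Hz; lra.
Qed.

Lemma up_mono t T : t <= T -> (up t <= up T)%Z.
Proof.
  intros H. destruct (archimed t) as [A1 A2]. destruct (archimed T) as [B1 B2].
  destruct (Z.le_gt_cases (up t) (up T)) as [|Hg]; auto.
  assert (IZR (up T) + 1 <= IZR (up t)).
  { rewrite <- plus_IZR. apply IZR_le. lia. }
  lra.
Qed.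

Lemma sum_ext_zero (f : nat -> R) K M : (K <= M)%nat -> (forall m, (K < m)%nat -> f m = 0) ->
  sum_f_R0 f M = sum_f_R0 f K.
Proof.
  intros HKM Hz. induction M.
  - replace K with 0%nat by lia. reflexivity.
  - destruct (Nat.eq_dec K (S M)) as [->|Hne]; [reflexivity|].
    rewrite tech5, IHM by lia. rewrite Hz by lia. ring.
Qed.

Lemma inner_eq s t T : 0 < t -> t <= T ->
  inner_sum s t = sum_f_R0 (fun m => sum_f_R0 (fun n => pair_term s t m n) m) (Z.to_nat (up T)).
Proof.
  intros Ht HtT. unfold inner_sum. symmetry. apply sum_ext_zero.
  - apply Z2Nat.inj_le. 
    + destruct (archimed t) as [A1 _]. assert (0 < IZR (up t)) by lra. apply lt_IZR in H. lia.
    + destruct (archimed t) as [A1 _]. assert (0 < IZR (up t)) by lra. apply lt_IZR in H.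
      pose proof (up_mono t T HtT). lia.
    + apply up_mono; auto.
  - intros m Hm. 
    assert (INR m > t).
    { destruct (archimed t) as [A1 _]. assert (0 < IZR (up t)) by lra. apply lt_IZR in H.
      apply lt_INR in Hm. rewrite INR_IZR_INZ, Z2Nat.id in Hm by lia. lra. }
    apply sum_eq_R0. intros n _. unfold pair_term. destruct (Rlt_dec (INR m) t); [lra|reflexivity].
Qed.

Lemma int_bound s T H (pr : Riemann_integrable (fun t => inner_sum s t) H T) : 0 < H -> H <= T ->
  RiemannInt pr <= 2 * sum_f_R0 (fun m => sum_f_R0 (fun n => wt s T m n) m) (Z.to_nat (up T)).
Proof.
  intros HH HT.
  set (M := Z.to_nat (up T)).
  destruct (is_RInt_sum (fun m t => sum_f_R0 (fun n => pair_term s t m n) m)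
                        (fun m => sum_f_R0 (fun n => 2 * wt s T m n) m) H T M) as [v [Hv Hb]].
  { intros m _. apply is_RInt_sum. intros n _. apply pair_int; auto. }
  assert (Hi : is_RInt (fun t => inner_sum s t) H T v).
  { eapply is_RInt_ext; [|exact Hv]. intros x Hx. rewrite Rmin_left, Rmax_right in Hx by lra.
    symmetry. apply inner_eq; lra. }
  rewrite <- RInt_Reals. rewrite (is_RInt_unique _ _ _ _ Hi).
  eapply Rle_trans; [exact Hb|]. right.
  rewrite scal_sum. apply sum_eq. intros m _. rewrite Rmult_comm, scal_sum. apply sum_eq. intros n _. ring.
Qed.

Definition Gf (s l : R) : R :=
  l * exp ((1 - 2 * s) * l) / (2 * (1 - s)) - (2 * s - 1) * l * exp (- l) / (2 * (1 - s))
  + (2 - s) * exp ((1 - 2 * s) * l) / (2 * (1 - s) ^ 2) - s * exp (- s * l) / (1 - s) ^ 2.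

Definition dGf (s l : R) : R :=
  (exp ((1 - 2 * s) * l) + l * (1 - 2 * s) * exp ((1 - 2 * s) * l)) / (2 * (1 - s))
  - (2 * s - 1) * (exp (- l) - l * exp (- l)) / (2 * (1 - s))
  + (2 - s) * (1 - 2 * s) * exp ((1 - 2 * s) * l) / (2 * (1 - s) ^ 2)
  + s * s * exp (- s * l) / (1 - s) ^ 2.

Lemma Gf_deriv s l : s < 1 -> derivable_pt_lim (Gf s) l (dGf s l).
Proof.
  intros Hs. apply is_derive_Reals. unfold Gf, dGf. auto_derive; auto. match goal with |- ?a = ?b => change (@eq R a b) end. field. lra.
Qed.

Lemma exp_ge_pow4 y : 0 <= y -> (1 + y / 4) ^ 4 <= exp y.
Proof.
  intros Hy. replace (exp y) with (exp (y/4) ^ 4).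
  - apply pow_incr. split; [lra|]. apply exp_ineq1_le.
  - simpl. rewrite Rmult_1_r, <- !exp_plus. f_equal. field.
Qed.

Lemma dGf_nonpos s l : 5208 / 10000 < s -> s < 9723 / 10000 -> 23 <= l -> dGf s l <= 0.
Proof.
  intros Hs1 Hs2 Hl.
  set (x := 1 - s). set (w := 2 * s - 1).
  set (X := exp ((1 - 2 * s) * l)). set (Y := exp ((2 * s - 2) * l)). set (Z := exp ((s - 1) * l)).
  assert (EY : exp (- l) = X * Y) by (unfold X, Y; rewrite <- exp_plus; f_equal; ring).
  assert (EZ : exp (- s * l) = X * Z) by (unfold X, Z; rewrite <- exp_plus; f_equal; ring).
  assert (HX : 0 < X) by apply exp_pos.
  assert (Hx1 : 277/10000 < x) by (unfold x; lra). assert (Hx2 : x < 4792/10000) by (unfold x; lra).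
  set (u := exp (- (23 * x))).
  assert (Hu0 : 0 < u) by apply exp_pos.
  assert (HZ : Z <= u).
  { unfold Z, u. destruct (Req_dec l 23) as [->|Hne].
    - right; f_equal; unfold x; ring.
    - left; apply exp_increasing. unfold x. nra. }
  assert (HY : (l - 1) * Y <= 22 * (u * u)).
  { assert (Euu : u * u = exp (- (46 * x))) by (unfold u; rewrite <- exp_plus; f_equal; ring).
    assert (EY2 : Y = exp (- (46 * x)) * exp (- (2 * x * (l - 23)))).
    { unfold Y. rewrite <- exp_plus. f_equal. unfold x. ring. }
    pose proof (exp_ineq1_le (2 * x * (l - 23))).
    assert (Hd : exp (- (2 * x * (l - 23))) * (1 + 2 * x * (l - 23)) <= 1).
    { rewrite exp_Ropp. assert (0 < exp (2 * x * (l - 23))) by apply exp_pos.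
      apply (Rmult_le_reg_l (exp (2 * x * (l - 23)))); auto.
      rewrite <- Rmult_assoc, Rinv_r by lra. nra. }
    rewrite EY2, <- Euu.
    assert (0 < exp (- (2 * x * (l - 23)))) by apply exp_pos.
    assert (0 <= l - 23) by lra.
    assert ((l - 1) <= 22 * (1 + 2 * x * (l - 23))) by nra.
    assert (0 < u * u) by nra.
    assert ((l - 1) * exp (- (2 * x * (l - 23))) <= 22) by nra.
    nra. }
  assert (Hub : (1 + 23 * x / 4) ^ 4 * u <= 1).
  { unfold u. rewrite exp_Ropp. pose proof (exp_ge_pow4 (23 * x) ltac:(lra)).
    assert (0 < exp (23 * x)) by apply exp_pos.
    apply (Rmult_le_reg_r (exp (23 * x))); auto. rewrite Rmult_assoc, Rinv_l by lra. lra. }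
  assert (dGf s l = X * ((1 - s) * (1 + (1 - 2 * s) * l) + (1 - s) * (2 * s - 1) * ((l - 1) * Y)
                 + (2 - s) * (1 - 2 * s) + 2 * s * s * Z) / (2 * (1 - s) ^ 2)) as E.
  { unfold dGf. fold X. rewrite EY, EZ. field. lra. }
  rewrite E. 
  assert (Phi : (1 - s) * (1 + (1 - 2 * s) * l) + (1 - s) * (2 * s - 1) * ((l - 1) * Y)
                 + (2 - s) * (1 - 2 * s) + 2 * s * s * Z <= 0).
  { assert (0 <= (1 - s) * (2 * s - 1) * (l - 23)) by (apply Rmult_le_pos; [nra|lra]).
    assert (T1 : (1 - s) * (1 + (1 - 2 * s) * l) <= x * (1 - 23 * w)) by (unfold x, w; nra).
    assert (T2 : (1 - s) * (2 * s - 1) * ((l - 1) * Y) <= x * w * (22 * (u * u))).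
    { unfold x, w. apply Rmult_le_compat_l; [nra|exact HY]. }
    assert (T3 : 2 * s * s * Z <= 2 * s * s * u) by (apply Rmult_le_compat_l; nra).
    assert (Q : x * (1 - 23 * w) + x * w * (22 * (u * u)) + (2 - s) * (1 - 2 * s) + 2 * s * s * u <= 0).
    { assert (Hs : s = 1 - x) by (unfold x; ring). assert (Hw : w = 1 - 2 * x) by (unfold w; lra).
      rewrite Hw, Hs.
      destruct (Rle_dec x (3/10)) as [Hx|Hx].
      - assert (u <= 56/100).
        { assert (18057/10000 <= (1 + 23 * x / 4) ^ 4).
          { apply Rle_trans with ((1 + 23 * (277/10000) / 4) ^ 4). lra.
            apply pow_incr. lra. }
          nra. }
        nra.
      - assert (u <= 2/100).
        { assert (50 <= (1 + 23 * x / 4) ^ 4).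
          { apply Rle_trans with ((1 + 23 * (3/10) / 4) ^ 4). lra.
            apply pow_incr. lra. }
          nra. }
        nra. }
    lra. }
  apply Rmult_le_compat_r with (r := / (2 * (1 - s) ^ 2)) in Phi.
  2: { left; apply Rinv_0_lt_compat. nra. }
  unfold Rdiv. rewrite Rmult_assoc. rewrite Rmult_0_l in Phi. 
  apply Rmult_le_reg_l with (r := / X). apply Rinv_0_lt_compat; auto.
  rewrite <- Rmult_assoc, Rinv_l, Rmult_1_l, Rmult_0_r by lra. exact Phi.
Qed.

Lemma Gf_mono s l L : 5208 / 10000 < s -> s < 9723 / 10000 -> 23 <= L -> L <= l -> Gf s l <= Gf s L.
Proof.
  intros Hs1 Hs2 HL HLl. destruct HLl as [Hlt|Heq]; [|subst; lra].
  destruct (MVT_cor2 (Gf s) (dGf s) L l Hlt) as [c [Hc1 Hc2]].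
  { intros c _. apply Gf_deriv. lra. }
  pose proof (dGf_nonpos s c Hs1 Hs2 ltac:(lra)). nra.
Qed.

Lemma wt_nonneg s T m n : 0 <= wt s T m n.
Proof.
  unfold wt. destruct (Nat.ltb 0 n) eqn:E0; simpl; [|lra].
  destruct (Nat.ltb n m) eqn:E1; [|lra]. destruct (Rlt_dec (INR m) T); [|lra].
  apply Nat.ltb_lt in E0, E1.
  assert (Hn : 0 < INR n) by (apply lt_0_INR; lia).
  assert (Hnm' : INR n < INR m) by (apply lt_INR; lia).
  assert (0 < ln (INR m / INR n)).
  { rewrite ln_div by lra. pose proof (ln_increasing _ _ Hn Hnm'). lra. }
  pose proof (Rpower_pos (INR n * INR m) s). left. apply Rinv_0_lt_compat. nra.
Qed.

Lemma exp_le_mono a b : a <= b -> exp a <= exp b.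
Proof. intros [H|H]. left; apply exp_increasing; auto. subst; lra. Qed.

Theorem mainTheorem8 (s H T : R)
  (hs1 : 5208 / 10000 < s) (hs2 : s < 9723 / 10000)
  (hH1 : 1000 <= H) (hH2 : H < H0) (hT : H0 <= T)
  (pr : Riemann_integrable (fun t => inner_sum s t) H T) :
  2 / (T - H) * RiemannInt pr <= eps1 s H.
Proof.
  assert (HH0 : H0 = 30610000000) by reflexivity.
  set (M := Z.to_nat (up T)).
  assert (HM : T <= INR M).
  { unfold M. destruct (archimed T) as [A1 _]. assert (Hu : 0 < IZR (up T)) by lra.
    apply lt_IZR in Hu. rewrite INR_IZR_INZ, Z2Nat.id by lia. lra. }
  assert (HM1 : (1 <= M)%nat).
  { destruct M. simpl in HM. lra. lia. }
  set (W := sum_f_R0 (fun m => sum_f_R0 (fun n => wt s T m n) m) M).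
  assert (HRI : RiemannInt pr <= 2 * W) by (apply int_bound; lra).
  assert (HW0 : 0 <= W) by (apply sum_nonneg_f; intros; apply sum_nonneg_f; intros; apply wt_nonneg).
  set (SA := sum_f_R0 (fun p => selT T p (Rpower (INR p) ((2 - 2 * s) - 1))) M).
  set (SB := sum_f_R0 (fun p => selT T p (/ INR p)) M).
  set (SC := sum_f_R0 (fun p => selT T p (Rpower (INR p) (- s))) M).
  set (SC2 := sum_f_R0 (fun p => selT T p (Rpower (INR p) (- s)) * selT T p (Rpower (INR p) (- s))) M).
  assert (HW : W <= SA * SB + (SC * SC - SC2) / 2) by (apply double_bound; lra).
  assert (HSA0 : 0 <= SA) by (apply sum_nonneg_f; intros; apply selT_nonneg; left; apply Rpower_pos).
  assert (HSB0 : 0 <= SB) by (apply sum_nonneg_f; intros; apply selT_nonneg; apply inv_INR_nonneg).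
  assert (HSC0 : 0 <= SC) by (apply sum_nonneg_f; intros; apply selT_nonneg; left; apply Rpower_pos).
  set (XA := 1 + (Rpower T (2 - 2 * s) - 1) / (2 - 2 * s)).
  set (XB := 1 + ln T).
  set (XC := 1 + (Rpower T (1 - s) - 1) / (1 - s)).
  assert (HSA : SA <= XA) by (apply boundA; auto; lra).
  assert (HSB : SB <= XB) by (apply boundB; auto; lra).
  assert (HSC : SC <= XC).
  { unfold SC. rewrite (sum_eq _ (fun p => selT T p (Rpower (INR p) ((1 - s) - 1)))).
    apply boundA; auto; lra. intros i _. do 3 f_equal. ring. }
  set (zeta := riemann_zeta (2 * s)).
  assert (HSC2 : zeta - Rpower T (- (2 * s)) - Rpower T (1 - 2 * s) / (2 * s - 1) <= SC2).
  { pose proof (zeta_le (2 * s) T M ltac:(lra) ltac:(lra) HM) as Hz.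
    assert (Hsc : SC2 = sum_f_R0 (fun p => selT T p (Rpower (INR p) (- (2 * s)))) M).
    { unfold SC2. apply sum_eq. intros i _. unfold selT.
      destruct (Nat.ltb 0 i); [|ring]. destruct (Rlt_dec (INR i) T); [|ring].
      rewrite <- Rpower_plus. f_equal. ring. }
    rewrite Hsc. fold zeta in Hz. replace (1 - 2 * s) with (1 - 2 * s) by ring. lra. }
  assert (HXA0 : 0 <= XA) by lra. assert (HXB0 : 0 <= XB) by lra.
  assert (HAB : SA * SB <= XA * XB) by (apply Rmult_le_compat; lra).
  assert (HCC : SC * SC <= XC * XC) by (apply Rmult_le_compat; lra).
  set (V := XA * XB + (XC * XC - zeta + Rpower T (- (2 * s)) + Rpower T (1 - 2 * s) / (2 * s - 1)) / 2).
  assert (HWV : W <= V) by (unfold V; lra).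
  set (l := ln T). set (L := ln H0).
  assert (HT0 : 0 < T) by lra.
  assert (ET : exp l = T) by (apply exp_ln; lra).
  assert (EH : exp L = H0) by (apply exp_ln; lra).
  assert (HL23 : 23 <= L) by (unfold L; rewrite HH0; apply ln_H0_ge).
  assert (HLl : L <= l) by (apply ln_le'; lra).
  set (U := exp ((1 - s) * l)).
  assert (HU0 : 0 < U) by apply exp_pos.
  assert (E1 : Rpower T (2 - 2 * s) = U * U) by (unfold Rpower, U; fold l; rewrite <- exp_plus; f_equal; ring).
  assert (E2 : Rpower T (1 - s) = U) by (unfold Rpower, U; fold l; f_equal; ring).
  assert (E3 : exp ((1 - 2 * s) * l) = U * U / T).
  { rewrite <- ET. unfold U. rewrite <- exp_plus. unfold Rdiv. rewrite <- exp_Ropp, <- exp_plus. f_equal. ring. }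
  assert (E3' : Rpower T (1 - 2 * s) = U * U / T) by (unfold Rpower; fold l; exact E3).
  assert (E4 : Rpower T (- (2 * s)) = U * U / (T * T)).
  { unfold Rpower; fold l. rewrite <- ET. unfold U. rewrite <- !exp_plus. unfold Rdiv.
    rewrite <- exp_Ropp, <- exp_plus. f_equal. ring. }
  assert (E5 : exp (- l) = / T) by (rewrite exp_Ropp, ET; reflexivity).
  assert (E6 : exp (- s * l) = U / T).
  { rewrite <- ET. unfold U. unfold Rdiv. rewrite <- exp_Ropp, <- exp_plus. f_equal. ring. }
  assert (E7 : exp (- (2 * s) * l) = U * U / (T * T)).
  { rewrite <- E4. unfold Rpower. fold l. reflexivity. }
  assert (E8 : exp ((- 2 * s - 1) * l) = U * U / (T * T * T)).
  { rewrite <- ET. unfold U. rewrite <- !exp_plus. unfold Rdiv.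
    rewrite <- exp_Ropp, <- !exp_plus. f_equal. ring. }
  set (c0 := (1 - 3 * s + 3 * s ^ 2) / (2 * (1 - s) ^ 2) - zeta / 2).
  assert (EV : V = T * (Gf s l + exp (- (2 * s) * l) / (2 * (2 * s - 1)) + exp ((- 2 * s - 1) * l) / 2) + c0).
  { unfold V, XA, XB, XC, c0, Gf. rewrite E1, E2, E3', E4, E3, E5, E6, E7, E8. fold l.
    field. repeat split; lra. }
  assert (HG : Gf s l <= Gf s L) by (apply Gf_mono; lra).
  assert (HF1 : exp (- (2 * s) * l) <= exp (- (2 * s) * L)) by (apply exp_le_mono; nra).
  assert (HF2 : exp ((- 2 * s - 1) * l) <= exp ((- 2 * s - 1) * L)) by (apply exp_le_mono; nra).
  set (Br := Gf s L + Rmax 0 c0 / H0 + exp (- (2 * s) * L) / (2 * (2 * s - 1)) + exp ((- 2 * s - 1) * L) / 2).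
  assert (Hc0 : c0 <= T * (Rmax 0 c0 / H0)).
  { assert (Hm1 : c0 <= Rmax 0 c0) by apply Rmax_r. assert (Hm2 : 0 <= Rmax 0 c0) by apply Rmax_l.
    assert (Rmax 0 c0 <= T * (Rmax 0 c0 / H0)).
    { replace (T * (Rmax 0 c0 / H0)) with (Rmax 0 c0 * (T / H0)) by (field; lra).
      assert (1 <= T / H0). { apply (Rmult_le_reg_r H0). lra. unfold Rdiv. rewrite Rmult_assoc, Rinv_l; lra. }
      nra. }
    lra. }
  assert (HVB : V <= T * Br).
  { rewrite EV. unfold Br.
    assert (0 < 2 * (2 * s - 1)) by lra.
    assert (exp (- (2 * s) * l) / (2 * (2 * s - 1)) <= exp (- (2 * s) * L) / (2 * (2 * s - 1))).
    { unfold Rdiv. apply Rmult_le_compat_r; auto. left; apply Rinv_0_lt_compat; auto. }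
    nra. }
  assert (HBr0 : 0 <= Br) by nra.
  assert (Eeps : eps1 s H = 4 * H0 / (H0 - H) * Br).
  { unfold eps1, Br, Gf, c0, Rpower. fold L. fold zeta.
    replace (- 2 * s) with (- (2 * s)) by ring.
    rewrite exp_Ropp, EH. field. repeat split; lra. }
  rewrite Eeps.
  assert (HTH : 0 < T - H) by lra.
  assert (Hfin1 : 2 / (T - H) * RiemannInt pr <= 4 * T * Br / (T - H)).
  { unfold Rdiv. rewrite Rmult_comm. rewrite (Rmult_comm (4 * T * Br)).
    assert (Hi : 0 < / (T - H)) by (apply Rinv_0_lt_compat; lra).
    assert (Hr : RiemannInt pr * 2 <= 4 * T * Br) by lra. nra. }
  assert (Hfin2 : 4 * T * Br / (T - H) <= 4 * H0 / (H0 - H) * Br).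
  { assert (Hq : T / (T - H) <= H0 / (H0 - H)).
    { apply (Rmult_le_reg_r ((T - H) * (H0 - H))). nra.
      replace (T / (T - H) * ((T - H) * (H0 - H))) with (T * (H0 - H)) by (field; lra).
      replace (H0 / (H0 - H) * ((T - H) * (H0 - H))) with (H0 * (T - H)) by (field; lra). nra. }
    replace (4 * T * Br / (T - H)) with (4 * Br * (T / (T - H))) by (field; lra).
    replace (4 * H0 / (H0 - H) * Br) with (4 * Br * (H0 / (H0 - H))) by (field; lra).
    apply Rmult_le_compat_l; lra. }
  lra.
Qed.
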